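(* Let $X$ be an $n$-dimensional projective space over a field, $-1\le t\le s\le n$, and let $K$ be a $k$-dimensional subspace of $X$ with $-1\le k\le n-s-1$. For every integer $-1\le d\le\min\{k,s\}$, suppose integers $t_1(d),s_1(d),t_2(d),s_2(d)$ satisfy $-1\le t_1(d)\le s_1(d)=d$, $-1\le t_2(d)\le s_2(d)$, $t_1(d)+t_2(d)+1=t$ and $s_1(d)+s_2(d)+1=s$, and choose a set $\mathcal B_K(d)\subseteq\mathrm{Gr}_{t_1(d)}(K)$ blocking $\mathrm{Gr}_{s_1(d)}(K)$ and a set $\mathcal B_{X/K}(d)\subseteq\mathrm{Gr}_{t_2(d)}(X/K)$ blocking $\mathrm{Gr}_{s_2(d)}(X/K)$. Then $\mathcal B:=\bigcup_{d=-1}^{\min\{k,s\}}\mathcal B(d)$ is an $(s,t)$-blocking set in $X$, where $$\mathcal B(d):=\{T\in\mathrm{Gr}_t(X): K\cap T\in\mathcal B_K(d),\ \langle K,T\rangle\in\mathcal B_{X/K}(d)\}.$$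
   Context: Projective dimension is used (empty subspace has dimension $-1$); $\mathrm{Gr}_d(Y)$ is the set of $d$-dimensional subspaces of $Y$. For a $k$-dimensional subspace $K$ of $X$, the quotient space $X/K$ is the projective space of dimension $\dim X-k-1$ whose $r$-dimensional subspaces are the $(r+k+1)$-dimensional subspaces of $X$ containing $K$; the span $\langle K,T\rangle$ is regarded as an element of $X/K$. A set $\mathcal B$ of $t$-dimensional subspaces blocks a set $\mathcal S$ of $s$-dimensional subspaces if every member of $\mathcal S$ contains a member of $\mathcal B$; an $(s,t)$-blocking set in $X$ is a subset of $\mathrm{Gr}_t(X)$ blocking $\mathrm{Gr}_s(X)$. *)

(* Defs.v *)
From HB Require Import structures.
From mathcomp Require Import all_boot all_order all_algebra.
Set Implicit Arguments. Unset Strict Implicit. Unset Printing Implicit Defensive.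
Import Order.TTheory GRing.Theory Num.Theory.
Local Open Scope ring_scope.

(* The projective space X is the lattice of subspaces of a finite-dimensional
   vector space V over a field F; X has projective dimension \dim V - 1. *)
Section Proj.
Variables (F : fieldType) (V : vectType F).

Definition pdim (U : {vspace V}) : int := (Posz (\dim U)) - 1.

Definition Gr (d : int) (Y : {vspace V}) : {vspace V} -> Prop :=
  fun U => (U <= Y)%VS /\ pdim U = d.

(* Gr_r(X/K): the r-dimensional subspaces of the quotient X/K, i.e. the
   (r+k+1)-dimensional subspaces of X containing K (k = pdim K). *)
Definition GrQ (K : {vspace V}) (r : int) : {vspace V} -> Prop :=
  fun U => (K <= U)%VS /\ pdim U = r + pdim K + 1.

Definition blocks (B S : {vspace V} -> Prop) : Prop :=
  forall S0, S S0 -> exists T, B T /\ (T <= S0)%VS.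
End Proj.

(* Main.v *)
Require Import Defs.
From HB Require Import structures.
From mathcomp Require Import all_boot all_order all_algebra.
From mathcomp Require Import zify.
Import Order.TTheory GRing.Theory Num.Theory.
Local Open Scope ring_scope.

Lemma dim_le0 (F : fieldType) (V : vectType F) (U W : {vspace V}) :
  (U :&: W = 0)%VS -> forall Z, (Z <= U :&: W)%VS -> \dim Z = 0%N.
Proof. move=> h Z hZ; have := dimvS hZ; rewrite h dimv0; lia. Qed.

Theorem corollary3p7 (F : fieldType) (V : vectType F)
  (n t s k : int) (K : {vspace V})
  (t1 s1 t2 s2 : int -> int)
  (BK BXK : int -> {vspace V} -> Prop) :
  pdim (fullv : {vspace V}) = n ->
  -1 <= t -> t <= s -> s <= n ->
  pdim K = k -> -1 <= k -> k <= n - s - 1 ->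
  (forall d : int, -1 <= d -> d <= k -> d <= s ->
     [/\ -1 <= t1 d, t1 d <= s1 d, s1 d = d, -1 <= t2 d & t2 d <= s2 d] /\
     t1 d + t2 d + 1 = t /\ s1 d + s2 d + 1 = s /\
     (forall U, BK d U -> Gr (t1 d) K U) /\ blocks (BK d) (Gr (s1 d) K) /\
     (forall U, BXK d U -> GrQ K (t2 d) U) /\ blocks (BXK d) (GrQ K (s2 d))) ->
  let Bd := fun (d : int) (T : {vspace V}) =>
    Gr t fullv T /\ BK d (K :&: T)%VS /\ BXK d (K + T)%VS in
  let B := fun T : {vspace V} =>
    exists d : int, [/\ -1 <= d, d <= k, d <= s & Bd d T] in
  (forall T, B T -> Gr t fullv T) /\ blocks B (Gr s fullv).
Proof.
move=> hn ht hts hsn hk hk1 hkn H Bd B.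
split; first by move=> T [d [_ _ _ []]].
move=> S [_ hS].
rewrite /pdim in hS hk.
have haK : (\dim (K :&: S) <= \dim K)%N by apply: dimvS; apply: capvSl.
have haS : (\dim (K :&: S) <= \dim S)%N by apply: dimvS; apply: capvSr.
have hsc := dimv_sum_cap K S.
have [a ha] : exists a, \dim (K :&: S) = a by eauto.
rewrite ha in haK haS hsc.
have [d hdE] : exists d : int, d = Posz a - 1 by eauto.
have hd1 : -1 <= d by lia.
have hdk : d <= k by lia.
have hds : d <= s by lia.
have [[h1 h2 h3 h4 h5] [h6 [h7 [h8 [h9 [h10 h11]]]]]] := H d hd1 hdk hds.
have [T1 [hT1 sT1]] : exists T1, BK d T1 /\ (T1 <= K :&: S)%VS.
  apply: h9; split; first exact: capvSl.
  by rewrite h3 /pdim ha hdE.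
have [T2 [hT2 sT2]] : exists T2, BXK d T2 /\ (T2 <= K + S)%VS.
  apply: h11; split; first exact: addvSl.
  rewrite /pdim; lia.
have [_ dT1] := h8 _ hT1.
have [KT2 dT2] := h10 _ hT2.
rewrite /pdim in dT1 dT2.
have sT1K : (T1 <= K)%VS := subv_trans sT1 (capvSl _ _).
have sT1S : (T1 <= S)%VS := subv_trans sT1 (capvSr _ _).
set W := (T2 :&: S)%VS.
set C := (W :\: K)%VS.
have CW : (C <= W)%VS := diffvSl _ _.
have CS : (C <= S)%VS := subv_trans CW (capvSr _ _).
have CT2 : (C <= T2)%VS := subv_trans CW (capvSl _ _).
have CK0 := capv_diff W K.
have eT2S : (T2 + S = K + S)%VS.
  apply/eqP; rewrite eqEsubv !subv_add sT2 addvSr /=.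
  by rewrite (subv_trans KT2 (addvSl _ _)) addvSr.
have hW := dimv_sum_cap T2 S; rewrite eT2S -/W in hW.
have eWK : \dim (W :&: K) = a.
  apply/eqP; rewrite -ha eqn_leq; apply/andP; split; apply: dimvS.
    by rewrite capvC capvS // capvSr.
  by rewrite subv_cap capvSl andbT subv_cap (subv_trans (capvSl _ _) KT2) capvSr.
have hC := dimv_sum_cap C (W :&: K).
rewrite addv_diff_cap in hC.
rewrite (@dim_le0 _ _ C K CK0 (C :&: (W :&: K))) in hC; last by apply: capvS => //; apply: capvSr.
have hKC := dimv_sum_cap K C.
rewrite (@dim_le0 _ _ C K CK0 (K :&: C)) in hKC; last by rewrite capvC.
set T := (T1 + C)%VS.
have hT := dimv_sum_cap T1 C; rewrite -/T in hT.
rewrite (@dim_le0 _ _ C K CK0 (T1 :&: C)) in hT; last by rewrite capvC capvS.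
have TS : (T <= S)%VS by rewrite subv_add sT1S.
have KTT2 : (K + T <= T2)%VS by rewrite !subv_add KT2 CT2 (subv_trans sT1K KT2).
have KCKT : (K + C <= K + T)%VS by rewrite subv_add addvSl /= (subv_trans (addvSr T1 C) (addvSr _ _)).
have dKT := dimvS KCKT.
have dKT2 := dimvS KTT2.
have eKT : (K + T = T2)%VS.
  by apply/eqP; rewrite eqEdim KTT2 /=; lia.
have hKT := dimv_sum_cap K T.
rewrite eKT in hKT.
have T1KT : (T1 <= K :&: T)%VS by rewrite subv_cap sT1K addvSl.
have eKT1 : (K :&: T = T1)%VS.
  apply/eqP; rewrite eq_sym eqEdim T1KT /=; lia.
exists T; split; last exact: TS.
exists d; split => //; split; last by rewrite eKT1 eKT.
split; first exact: subvf.
rewrite /pdim; lia.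
Qed.
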